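(* Let $p>155$ be a prime, let $G$ be a cyclic group of order $p$, and let $S$ be an unsplittable minimal zero-sum sequence over $G$ of length $|S|=\frac{p-1}{2}$. Then there do not exist $g\in G$ and integers $r_1\ge r_2\ge r_3>0$ such that $S=g^{r_1}\big(\frac{p-1}{2}g\big)^{r_2}\big(\frac{p+3}{2}g\big)^{r_3}$.
   Context: A sequence over $G$ is a finite unordered list of elements of $G$ with repetition allowed, written multiplicatively; $h^r$ denotes $r$ copies of $h$ and $tg$ is the $t$-fold multiple of $g$. $|S|$ is the length, $\sigma(S)$ the sum of terms, and $\operatorname{supp}(S)$ the set of distinct elements occurring. $S$ is a minimal zero-sum sequence if $\sigma(S)=0$ and no subsequence $U$ with $1\le|U|<|S|$ has $\sigma(U)=0$. A minimal zero-sum sequence $S$ is unsplittable if there do not exist $h\in\operatorname{supp}(S)$ and $y,z\in G$ with $y+z=h$ such that the sequence obtained from $S$ by replacing one copy of $h$ with the two terms $y,z$ is again a minimal zero-sum sequence. *)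

(* Defs.v *)
From mathcomp Require Import all_boot all_order all_algebra.
Set Implicit Arguments. Unset Strict Implicit. Unset Printing Implicit Defensive.
Import GRing.Theory.
Local Open Scope ring_scope.

(* A sequence over an additive abelian group G is modelled as a list [seq G];
   order is irrelevant (all notions below are invariant under perm_eq). *)

Definition sigma (G : zmodType) (S : seq G) : G := \sum_(x <- S) x.

Definition minimal_zero_sum (G : zmodType) (S : seq G) : Prop :=
  S <> [::] /\ sigma S = 0 /\
  forall U : seq G, subseq U S -> (0 < size U)%N -> (size U < size S)%N ->
    sigma U <> 0.

Definition unsplittable (G : zmodType) (S : seq G) : Prop :=
  minimal_zero_sum S /\
  ~ (exists h y z : G, h \in S /\ y + z = h /\
       minimal_zero_sum (y :: z :: rem h S)).

Definition add_cyclic (G : zmodType) : Prop :=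
  exists g0 : G, forall x : G, exists k : nat, x = g0 *+ k.

(* Main.v *)
Require Import Defs.
From mathcomp Require Import all_boot all_order all_algebra all_fingroup.
From mathcomp Require Import cyclic zify ring.
Import GRing.Theory.
Local Open Scope ring_scope.

Lemma sigma_nseq (G : zmodType) (n : nat) (x : G) : sigma (nseq n x) = x *+ n.
Proof.
rewrite /sigma; elim: n => [|n IH]; first by rewrite big_nil.
by rewrite /= big_cons IH mulrS.
Qed.

Lemma sigma_cat (G : zmodType) (s t : seq G) : sigma (s ++ t) = sigma s + sigma t.
Proof. by rewrite /sigma big_cat. Qed.

Lemma ord_div (G : finZmodType) (p : nat) (g : G) (N : nat) :
  prime p -> #|[set: G]| = p -> g != 0 -> g *+ N = 0 -> (p %| N)%N.
Proof.
move=> pp cG g0 gN.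
have oG : (#[g]%g %| p)%N.
  rewrite -cG; apply: order_dvdG; exact: in_setT.
have o1 : (#[g]%g == 1%N) = false by rewrite order_eq1; exact/negbTE.
case/primeP: pp => _ /(_ _ oG) /orP [|/eqP <-]; first by rewrite o1.
by rewrite order_dvdn (FinRing.zmodXgE) gN.
Qed.

Lemma arith (p n r1 r2 r3 N : nat) : p = n.*2.+1 -> (155 < p)%N ->
  (r2 <= r1)%N -> (r3 <= r2)%N -> (0 < r3)%N -> (r1 + r2 + r3 = n)%N ->
  N = (r1 + n * r2 + (n + 2) * r3)%N -> ~~ (p %| N)%N.
Proof.
move=> -> hp h21 h32 h3 hs ->; apply/negP => hd.
have [e he] : exists e, r2 = (r3 + e)%N by exists (r2 - r3)%N; lia.
subst r2 n.
have E : ((r1 + (r3 + e) + r3).*2.+1 * (1 + (r3 + e) + r3) =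
   (r1 + (r1 + (r3 + e) + r3) * (r3 + e) + (r1 + (r3 + e) + r3 + 2) * r3).*2
   + (2 * r3 + 3 * e + 1))%N.
  nia.
have : ((r1 + (r3 + e) + r3).*2.+1 %| 2 * r3 + 3 * e + 1)%N.
  by rewrite -(dvdn_addr _ (dvdn_mull 2 hd)) mul2n -E dvdn_mulr.
move/dvdn_leq; rewrite addn1 ltn0Sn => /(_ isT); lia.
Qed.

Theorem lemma3p4 (p : nat) (G : finZmodType) (S : seq G) :
  prime p -> (155 < p)%N -> #|[set: G]| = p -> add_cyclic G ->
  unsplittable S -> size S = p.-1./2 ->
  ~ (exists (g : G) (r1 r2 r3 : nat),
        [/\ (r2 <= r1)%N, (r3 <= r2)%N, (0 < r3)%N &
            perm_eq S (nseq r1 g ++ nseq r2 (g *+ p.-1./2)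
                                 ++ nseq r3 (g *+ (p + 3)./2))]).
Proof.
move=> pp p155 cG _ [[Sne [sS0 minS]] _] sz [g [r1 [r2 [r3 [h21 h32 r30 pe]]]]].
set n := p.-1./2 in sz pe.
have op : odd p.
  by case: (even_prime pp) => // p2; rewrite p2 in p155.
have pn : p = n.*2.+1.
  have := odd_double_half p.-1.
  rewrite /n; case: p op p155 {pp cG sz pe n} => //= q oq _.
  by rewrite (negbTE oq) add0n => ->.
have h3 : (p + 3)./2 = (n + 2)%N.
  by rewrite pn (_ : _ + 3 = (n + 2).*2)%N ?doubleK // -!mul2n; lia.
rewrite h3 in pe.
have ssz := perm_size pe; rewrite !size_cat !size_nseq sz in ssz.
have sig : sigma S = g *+ (r1 + n * r2 + (n + 2) * r3).
  rewrite /sigma (perm_big _ pe) -/(sigma _) !sigma_cat !sigma_nseq.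
  rewrite -!mulrnA addrA !mulrnDr.
  by [].
case: (eqVneq g 0) => [g0|gn0].
  have mem0 : (0 : G) \in S.
    rewrite (perm_mem pe) !mem_cat g0 mul0rn.
    rewrite !mem_nseq /=.
    by rewrite mul0rn eqxx r30 !orbT.
  refine (minS [:: 0] _ _ _ _); first by rewrite sub1seq.
  - by [].
  - rewrite sz /n pn /=; rewrite -addnn; lia.
  - by rewrite /sigma big_cons big_nil addr0.
have := ord_div _ _ _ _ pp cG gn0 (etrans (esym sig) sS0).
apply/negP; apply: (arith _ _ _ _ _ _ pn p155 h21 h32 r30 _ erefl); lia.
Qed.
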